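(* Let $n\in\mathbb{N}$, let $W$ be a subspace of $\mathcal{T}_n$, and let $V=\mathcal{T}_n/W$. Then the matrix unit ball of $V$ is operator compact.
   Context: $\mathcal{T}_n$ denotes the trace class operators on $\mathbb{C}^n$ with the operator space structure of the dual of $M_n$, and $V=\mathcal{T}_n/W$ carries the quotient operator space structure. The matrix unit ball of an operator space $V$ is the matrix set $(B_k)_k$ with $B_k$ the closed unit ball of $M_k(V)$. $\mathcal{K}$ denotes the compact operators on $\ell^2$ and $\mathcal{K}(V)=\mathcal{K}\check{\otimes}V$ the operator-space minimal tensor product (completion of $M_\infty(V)$). $\mathcal{T}$ is the trace class on $\ell^2$ as operator space dual of $\mathcal{K}$, $M_k(\mathcal{T})\cong\mathcal{CB}(\mathcal{K},M_k)$ with norm $\|\cdot\|_{\mathcal{T}}$, $M_\infty\subseteq\mathcal{T}$, and $(\sigma\otimes\mathrm{id})(x)\in M_k(V)$ is the slice map. A matrix set $\boldsymbol{X}=(X_k)$, $X_k\subseteq M_k(V)$, is operator compact if each $X_k$ is closed and there is $x\in\mathcal{K}(V)$ with $X_k\subseteq\overline{\{(\sigma\otimes\mathrm{id})(x):\sigma\in M_k(M_\infty),\|\sigma\|_{\mathcal{T}}\le1\}}$ for all $k$. *)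

(* Defs.v *)
From HB Require Import structures.
From mathcomp Require Import all_boot all_order all_algebra.
From mathcomp Require Import reals.
From mathcomp Require Import complex.
Set Implicit Arguments. Unset Strict Implicit. Unset Printing Implicit Defensive.
Import Order.TTheory GRing.Theory Num.Theory.
Local Open Scope ring_scope.
Local Open Scope complex_scope.

Section OpSpace.
Variable R : realType.
Local Notation C := (R[i]).

Definition sqmod (z : C) : R := (complex.Re z) ^+ 2 + (complex.Im z) ^+ 2.

Definition vnorm2 (I : finType) (v : I -> C) : R := \sum_(i : I) sqmod (v i).

Definition opnorm_le (I J : finType) (A : I -> J -> C) (c : R) : Prop :=
  0 <= c /\ forall v : J -> C,
    vnorm2 (fun i => \sum_(j : J) A i j * v j) <= c ^+ 2 * vnorm2 v.

(* A k x k matrix x over the dual of M_N (functionals identified with N x N matrices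
   through the pairing <t, a> = \sum_{p,q} t p q * a p q) determines the
   linear map  Phi_x : M_N -> M_k,  a |-> [ <x i j, a> ]_{i,j}.
   Its m-th amplification sends A in M_m(M_N) = M_{mN} to Phi_m(A) in M_{mk}. *)
Definition blk (m N : nat) (A : 'M['M[C]_N]_m) : ('I_m * 'I_N) -> ('I_m * 'I_N) -> C :=
  fun rp sq => A rp.1 sq.1 rp.2 sq.2 .

Definition ampl (k N m : nat) (x : 'M['M[C]_N]_k) (A : 'M['M[C]_N]_m) :
    ('I_m * 'I_k) -> ('I_m * 'I_k) -> C :=
  fun ri sj => \sum_(p < N) \sum_(q < N) x ri.2 sj.2 p q * A ri.1 sj.1 p q.

(* Norm of x in M_k(dual of M_N) = M_k(T_N) is <= c, where the norm is the
   completely bounded norm of Phi_x : M_N -> M_k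
   (the operator space structure of the dual of M_N). *)
Definition dualnorm_le (k N : nat) (x : 'M['M[C]_N]_k) (c : R) : Prop :=
  forall (m : nat) (A : 'M['M[C]_N]_m) (d : R),
    opnorm_le (blk A) d -> opnorm_le (ampl x A) (c * d).

(* V = T_n / W.  Elements of M_k(V) are represented by elements of M_k(T_n).
   "quotient norm of x in M_k(T_n/W) is <= c":
   inf_{w in M_k(W)} ||x + w||_{M_k(T_n)} <= c. *)
Definition qnorm_le (n k : nat) (W : {vspace 'M[C]_n}) (x : 'M['M[C]_n]_k) (c : R)
  : Prop :=
  forall eps : R, 0 < eps ->
    exists w : 'M['M[C]_n]_k, (forall i j, w i j \in W) /\
      dualnorm_le (\matrix_(i, j) (x i j + w i j)) (c + eps).

Definition unit_ball (n : nat) (W : {vspace 'M[C]_n}) (k : nat) : 'M['M[C]_n]_k -> Prop :=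
  fun x => qnorm_le W x 1.

Definition qclosure (n k : nat) (W : {vspace 'M[C]_n}) (S : 'M['M[C]_n]_k -> Prop)
  : 'M['M[C]_n]_k -> Prop :=
  fun y => forall eps : R, 0 < eps ->
    exists s, S s /\ qnorm_le W (\matrix_(i, j) (y i j - s i j)) eps.

Definition qclosed (n k : nat) (W : {vspace 'M[C]_n}) (S : 'M['M[C]_n]_k -> Prop)
  : Prop := forall y, qclosure W S y -> S y.

(* Elements of K(V) = K \check\otimes V (completion of M_infty(V)) are given as
   infinite matrices x : nat -> nat -> T_n (representatives mod W) whose
   upper-left m x m truncations form a Cauchy sequence in M_infty(V):
   the difference between the m2- and the (zero-padded) m1-truncation is
   the matrix below. *)
Definition tail_diff (n : nat) (x : nat -> nat -> 'M[C]_n) (m1 m2 : nat)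
  : 'M['M[C]_n]_m2 :=
  \matrix_(i < m2, j < m2) (if (i < m1)%N && (j < m1)%N then 0 else x i j).

Definition in_KV (n : nat) (W : {vspace 'M[C]_n}) (x : nat -> nat -> 'M[C]_n) : Prop :=
  forall eps : R, 0 < eps -> exists M : nat, forall m1 m2 : nat,
    (M <= m1)%N -> (m1 <= m2)%N -> qnorm_le W (tail_diff x m1 m2) eps.

(* slice map (sigma \otimes id)(x) in M_k(V) for sigma in M_k(M_infty),
   sigma supported in the first N x N corner (given as a k x k matrix of
   N x N matrices), using the pairing of T with K above. *)
Definition slice (n k N : nat) (s : 'M['M[C]_N]_k) (x : nat -> nat -> 'M[C]_n)
  : 'M['M[C]_n]_k :=
  \matrix_(i, j) \sum_(p < N) \sum_(q < N) s i j p q *: x p q.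

Definition operator_compact (n : nat) (W : {vspace 'M[C]_n})
  (X : forall k : nat, 'M['M[C]_n]_k -> Prop) : Prop :=
  (forall k, qclosed W (X k)) /\
  exists x : nat -> nat -> 'M[C]_n, in_KV W x /\
    forall (k : nat) (y : 'M['M[C]_n]_k), X k y ->
      qclosure W (fun z : 'M['M[C]_n]_k =>
          exists (N : nat) (s : 'M['M[C]_N]_k), dualnorm_le s 1 /\ z = slice s x) y.

End OpSpace.

(* Main.v *)
Require Import Defs.
From HB Require Import structures.
From mathcomp Require Import all_boot all_order all_algebra.
From mathcomp Require Import reals complex.
From mathcomp Require Import ring lra.
Set Implicit Arguments. Unset Strict Implicit. Unset Printing Implicit Defensive.
Import Order.TTheory GRing.Theory Num.Theory.
Local Open Scope ring_scope.
Local Open Scope complex_scope.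

Section S.
Variable R : realType.
Local Notation C := (R[i]).

Lemma sqmod_ge0 (z : C) : 0 <= sqmod z.
Proof. by rewrite /sqmod addr_ge0 // sqr_ge0. Qed.

Lemma sqmod_scale (r : R) (z : C) : sqmod (r%:C * z) = r ^+ 2 * sqmod z.
Proof. case: z => a b; rewrite /sqmod /=. ring. Qed.

Lemma sqmod_add (c1 c2 : R) (a b : C) : 0 <= c1 -> 0 <= c2 ->
  c1 * c2 * sqmod (a + b) <= (c1 + c2) * (c2 * sqmod a + c1 * sqmod b).
Proof.
case: a => a1 a2; case: b => b1 b2 h1 h2; rewrite /sqmod /=.
rewrite -subr_ge0.
have -> : (c1 + c2) * (c2 * (a1 ^+ 2 + a2 ^+ 2) + c1 * (b1 ^+ 2 + b2 ^+ 2)) -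
  c1 * c2 * ((a1 + b1) ^+ 2 + (a2 + b2) ^+ 2) = (c2 * a1 - c1 * b1) ^+ 2 + (c2 * a2 - c1 * b2) ^+ 2 by ring.
by rewrite addr_ge0 // sqr_ge0.
Qed.

Lemma sqmod0 (z : C) : sqmod z = 0 -> z = 0.
Proof.
case: z => a b; rewrite /sqmod /= => h.
have := sqr_ge0 a; have := sqr_ge0 b => g1 g2.
have ha : a ^+ 2 = 0 by apply/eqP; rewrite eq_le sqr_ge0 andbT; lra.
have hb : b ^+ 2 = 0 by apply/eqP; rewrite eq_le sqr_ge0 andbT; lra.
by move: ha hb => /eqP; rewrite sqrf_eq0 => /eqP -> /eqP; rewrite sqrf_eq0 => /eqP ->.
Qed.

Lemma vnorm2_ge0 (I : finType) (v : I -> C) : 0 <= vnorm2 v.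
Proof. by apply: sumr_ge0 => i _; apply: sqmod_ge0. Qed.

Lemma opnorm_mono (I J : finType) (A : I -> J -> C) c c' :
  c <= c' -> opnorm_le A c -> opnorm_le A c'.
Proof.
move=> le [c0 h]; split; first exact: le_trans le.
move=> v; apply: le_trans (h v) _; apply: ler_wpM2r; first exact: vnorm2_ge0.
by rewrite lerXn2r // ?nnegrE //; apply: le_trans le.
Qed.

Lemma opnorm_scale (I J : finType) (A : I -> J -> C) (r c : R) :
  0 <= r -> opnorm_le A c -> opnorm_le (fun i j => r%:C * A i j) (r * c).
Proof.
move=> r0 [c0 h]; split; first exact: mulr_ge0.
move=> v.
have -> : vnorm2 (fun i => \sum_j r%:C * A i j * v j) =
   r ^+ 2 * vnorm2 (fun i => \sum_j A i j * v j).
  rewrite /vnorm2 mulr_sumr; apply: eq_bigr => i _.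
  rewrite -sqmod_scale mulr_sumr; congr sqmod; apply: eq_bigr => j _.
  by rewrite mulrA.
rewrite exprMn -[r ^+ 2 * _ * vnorm2 v]mulrA; apply: ler_wpM2l; first exact: sqr_ge0.
exact: h.
Qed.

Lemma vnorm2_eq0 (I : finType) (v : I -> C) : vnorm2 v <= 0 -> forall i, v i = 0.
Proof.
move=> h i; apply: sqmod0.
have e : vnorm2 v = 0 by apply/eqP; rewrite eq_le h vnorm2_ge0.
move/eqP: e; rewrite /vnorm2 psumr_eq0; last by move=> j _; apply: sqmod_ge0.
by move/allP/(_ i (mem_index_enum i))/implyP/(_ isT)/eqP.
Qed.

Lemma vnorm2_ext (I : finType) (u w : I -> C) : (forall i, u i = w i) -> vnorm2 u = vnorm2 w.
Proof. by move=> h; apply: eq_bigr => i _; rewrite h. Qed.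

Lemma opnorm_add (I J : finType) (A B : I -> J -> C) c1 c2 :
  opnorm_le A c1 -> opnorm_le B c2 -> opnorm_le (fun i j => A i j + B i j) (c1 + c2).
Proof.
move=> [h1 hA] [h2 hB]; split; first exact: addr_ge0.
move=> v.
set a := fun i => \sum_j A i j * v j.
set b := fun i => \sum_j B i j * v j.
have -> : vnorm2 (fun i => \sum_j (A i j + B i j) * v j) = vnorm2 (fun i => a i + b i).
  by apply: vnorm2_ext => i; rewrite /a /b -big_split; apply: eq_bigr => j _; rewrite mulrDl.
have ha := hA v; have hb := hB v; rewrite -/a in ha; rewrite -/b in hb.
have V0 := vnorm2_ge0 v.
have [c10|c1n0] := eqVneq c1 0.
  have a0 : forall i, a i = 0 by apply: vnorm2_eq0; move: ha; rewrite c10 expr0n /= mul0r.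
  rewrite (vnorm2_ext (w := b)) ?c10 ?add0r // => i; by rewrite a0 add0r.
have [c20|c2n0] := eqVneq c2 0.
  have b0 : forall i, b i = 0 by apply: vnorm2_eq0; move: hb; rewrite c20 expr0n /= mul0r.
  rewrite (vnorm2_ext (w := a)) ?c20 ?addr0 // => i; by rewrite b0 addr0.
have p1 : 0 < c1 by rewrite lt_def c1n0 h1.
have p2 : 0 < c2 by rewrite lt_def c2n0 h2.
have p12 : 0 < c1 * c2 by apply: mulr_gt0.
rewrite -(ler_pM2l p12).
apply: le_trans (_ : (c1 + c2) * (c2 * vnorm2 a + c1 * vnorm2 b) <= _).
  rewrite /vnorm2 mulr_sumr !mulr_sumr -big_split mulr_sumr; apply: ler_sum => i _.
  by apply: sqmod_add.
have : c2 * vnorm2 a + c1 * vnorm2 b <= c2 * (c1 ^+ 2 * vnorm2 v) + c1 * (c2 ^+ 2 * vnorm2 v).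
  by apply: lerD; apply: ler_wpM2l.
move=> hh; apply: le_trans (_ : (c1 + c2) * (c2 * (c1 ^+ 2 * vnorm2 v) + c1 * (c2 ^+ 2 * vnorm2 v)) <= _).
  by apply: ler_wpM2l => //; apply: addr_ge0.
by rewrite le_eqVlt; apply/orP; left; apply/eqP; ring.
Qed.

Lemma opnorm_ext (I J : finType) (A B : I -> J -> C) c :
  (forall i j, A i j = B i j) -> opnorm_le A c -> opnorm_le B c.
Proof.
move=> e [c0 h]; split => // v; rewrite -(vnorm2_ext (u := fun i => \sum_j A i j * v j)); first exact: h.
by move=> i; apply: eq_bigr => j _; rewrite e.
Qed.

Lemma opnorm_zero (I J : finType) c : 0 <= c -> opnorm_le (fun (_ : I) (_ : J) => 0 : C) c.
Proof.
move=> c0; split => // v; rewrite (vnorm2_ext (w := fun _ => 0)).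
  rewrite /vnorm2 big1 ?mulr_ge0 ?vnorm2_ge0 ?sqr_ge0 // => i _; by rewrite /sqmod /= expr0n /= addr0.
by move=> i; rewrite big1 // => j _; rewrite mul0r.
Qed.

Lemma dual_add k N (x y : 'M['M[C]_N]_k) c1 c2 :
  dualnorm_le x c1 -> dualnorm_le y c2 -> dualnorm_le (x + y) (c1 + c2).
Proof.
move=> h1 h2 m A d hd; rewrite mulrDl.
apply: (opnorm_ext (A := fun ri sj => ampl x A ri sj + ampl y A ri sj)).
  move=> ri sj; rewrite /ampl -big_split; apply: eq_bigr => p _.
  rewrite -big_split; apply: eq_bigr => q _; by rewrite !mxE mulrDl.
by apply: opnorm_add; [apply: h1 | apply: h2].
Qed.

Lemma dual_scale k N (x : 'M['M[C]_N]_k) (r c : R) :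
  0 <= r -> dualnorm_le x c -> dualnorm_le (\matrix_(i, j) (r%:C *: x i j)) (r * c).
Proof.
move=> r0 h m A d hd; rewrite -mulrA.
apply: (opnorm_ext (A := fun ri sj => r%:C * ampl x A ri sj)).
  move=> ri sj; rewrite /ampl mulr_sumr; apply: eq_bigr => p _.
  rewrite mulr_sumr; apply: eq_bigr => q _; by rewrite !mxE mulrA.
by apply: opnorm_scale => //; apply: h.
Qed.

Lemma dual_mono k N (x : 'M['M[C]_N]_k) c c' :
  c <= c' -> dualnorm_le x c -> dualnorm_le x c'.
Proof.
move=> le h m A d hd; apply: opnorm_mono (h m A d hd).
by apply: ler_wpM2r => //; case: hd.
Qed.

Lemma dual_zero k N c : 0 <= c -> dualnorm_le (0 : 'M['M[C]_N]_k) c.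
Proof.
move=> c0 m A d [d0 _]; apply: (opnorm_ext (A := fun _ _ => 0)).
  move=> ri sj; rewrite /ampl big1 // => p _; rewrite big1 // => q _; by rewrite !mxE mul0r.
by apply: opnorm_zero; apply: mulr_ge0.
Qed.
End S.

Lemma dual_eq (R : realType) k N (x y : 'M['M[R[i]]_N]_k) c c' :
  dualnorm_le x c -> c <= c' -> x = y -> dualnorm_le y c'.
Proof. by move=> h le <-; apply: dual_mono h. Qed.

Definition xid (R : realType) (n : nat) : nat -> nat -> 'M[R[i]]_n :=
  fun p q => \matrix_(a, b) ((a == p :> nat) && (b == q :> nat))%:R.

Theorem lemma6p1 (R : realType) (n : nat) (W : {vspace 'M[R[i]]_n}) :
  operator_compact W (fun k => @unit_ball R n W k).
Proof.
split.
  move=> k y hy eps e0.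
  have e0' : 0 < eps / 3 by apply: divr_gt0.
  case: (hy _ e0') => s [hs hys].
  case: (hs _ e0') => w1 [hw1 d1].
  case: (hys _ e0') => w2 [hw2 d2].
  exists (\matrix_(i, j) (w1 i j + w2 i j)); split.
    by move=> i j; rewrite mxE memvD.
  have := dual_add d1 d2.
  have -> : 1 + eps / 3 + (eps / 3 + eps / 3) = 1 + eps by field.
  congr dualnorm_le; apply/matrixP => i j; rewrite !mxE.
  apply/matrixP => p q; rewrite !mxE; ring.
exists (@xid R n); split.
  move=> eps e0; exists n => m1 m2 hM hm eps' e0'.
  exists 0; split; first by move=> i j; rewrite mxE mem0v.
  have -> : \matrix_(i, j) (tail_diff (@xid R n) m1 m2 i j + (0 : 'M['M[R[i]]_n]_m2) i j) = 0.
    apply/matrixP => i j; rewrite !mxE addr0.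
    case: ifP => // h; apply/matrixP => a b; rewrite !mxE.
    move/negbT: h; rewrite negb_and -!leqNgt => /orP [hi|hj].
      have -> : (a == i :> nat) = false.
        by apply/negbTE; rewrite neq_ltn (leq_trans (ltn_ord a)) // (leq_trans hM).
      by [].
    have -> : (b == j :> nat) = false.
      by apply/negbTE; rewrite neq_ltn (leq_trans (ltn_ord b)) // (leq_trans hM).
    by rewrite andbF.
  by apply: dual_zero; apply: addr_ge0; apply: ltW.
move=> k y hy eps e0.
case: (hy _ e0) => w [hw d].
have e1 : 0 < 1 + eps by apply: addr_gt0.
set r := (1 + eps)^-1.
have r0 : 0 <= r by rewrite invr_ge0 ltW.
have r1 : r <= 1 by rewrite invf_le1 // lerDl ltW.
set s := \matrix_(i, j) (r%:C *: (\matrix_(i, j) (y i j + w i j) : 'M['M[R[i]]_n]_k) i j).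
have hs : slice s (@xid R n) = s.
  apply/matrixP => i j; rewrite mxE [in RHS](matrix_sum_delta (s i j)).
  apply: eq_bigr => p _; apply: eq_bigr => q _; congr (_ *: _).
  by apply/matrixP => a b; rewrite !mxE.
exists s; split.
  exists n, s; split => //.
  have := dual_scale r0 d; rewrite mulVf ?gt_eqF //.
move=> eps' e0'.
exists w; split => //.
have r1' : 0 <= 1 - r by rewrite subr_ge0.
have := dual_scale r1' d.
move=> h; apply: (dual_eq h).
  rewrite mulrBl mul1r mulVf ?gt_eqF //.
  lra.
apply/matrixP => i j; rewrite !mxE.
apply/matrixP => p q; rewrite !mxE rmorphB /= rmorph1; ring.
Qed.
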